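(* Let $n\ge 2$. Let $\hat a_{i,i-1}>0$ and $\hat b_{i,i-1}\in\mathbb{R}$ for $2\le i\le n$; for $1\le m\le k\le n$ put $\hat a_{k,m}:=\prod_{i=m+1}^{k}\hat a_{i,i-1}$ (so $\hat a_{k,k}=1$), and put $\hat b_{n,1}:=\sum_{k=2}^{n}\hat a_{n,k}\hat b_{k,k-1}$. Let $L_i\in\mathbb{R}$ ($2\le i\le n$) and $R_i\in\mathbb{R}$ ($1\le i\le n-1$) satisfy $L_i=\hat a_{i,i-1}R_{i-1}+\hat b_{i,i-1}$ for $2\le i\le n$ and $L_i\le R_i$ for $2\le i\le n-1$. Define $i^*$: if $\min_{2\le k\le n}\hat a_{k,1}\le1$, let $i^*\in\{2,\ldots,n\}$ be an index attaining $\min_{2\le k\le n}\hat a_{k,1}$; otherwise $i^*=1$. Suppose $i^*\ge 2$. Then $$\sum_{j=2}^{n}\bigl(L_j-R_{j-1}\bigr)\le(\hat a_{i^*,1}-1)R_1+\frac{\hat a_{n,i^*}-1}{\hat a_{n,i^*}}\,L_n+\frac{\hat b_{n,1}}{\hat a_{n,i^*}}.$$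
   Context: Setting: a timing packet traverses a chain of nodes $1,\ldots,n$; $L_i=\tau^{i,l}(t_{i,l})$ is the receive time-stamp and $R_i=\tau^{i,r}(t_{i,r})$ the send time-stamp of node $i$, produced by arbitrary ''left''/''right'' clocks. $\hat a_{i,i-1},\hat b_{i,i-1}$ are declared relative skews/offsets of adjacent nodes, $\hat a_{k,m}$ the skew product, and $\hat b_{n,1}$ the offset of the composition of the declared affine relations along the chain. The equation $L_i=\hat a_{i,i-1}R_{i-1}+\hat b_{i,i-1}$ is the skew-consistency condition and $L_i\le R_i$ is causality. *)

(* Defs.v *)
From HB Require Import structures.
From mathcomp Require Import all_boot all_order all_algebra.
Set Implicit Arguments. Unset Strict Implicit. Unset Printing Implicit Defensive.
Import Order.TTheory GRing.Theory Num.Theory.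
Local Open Scope ring_scope.

(* a i stands for \hat a_{i,i-1} (meaningful for 2 <= i <= n),
   b i stands for \hat b_{i,i-1}. *)

Definition ahat {R : ringType} (a : nat -> R) (k m : nat) : R :=
  \prod_(m.+1 <= i < k.+1) a i.

Definition bhat {R : ringType} (a b : nat -> R) (n : nat) : R :=
  \sum_(2 <= k < n.+1) ahat a n k * b k.

(* Main.v *)
Require Import Defs.
From HB Require Import structures.
From mathcomp Require Import all_boot all_order all_algebra.
From mathcomp Require Import zify ring lra.
Import Order.TTheory GRing.Theory Num.Theory.
Local Open Scope ring_scope.

Lemma ahat1 (R : realFieldType) (a : nat -> R) : ahat a 1 1 = 1.
Proof. by rewrite /ahat big_geq. Qed.

Lemma ahat_rec (R : realFieldType) (a : nat -> R) k : (1 <= k)%N ->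
  ahat a k.+1 1 = ahat a k 1 * a k.+1.
Proof. move=> hk; rewrite /ahat big_nat_recr //=. Qed.

Lemma ahat_split (R : realFieldType) (a : nat -> R) k m : (1 <= m <= k)%N ->
  ahat a k 1 = ahat a m 1 * ahat a k m.
Proof. move=> /andP[h1 h2]; rewrite /ahat (big_cat_nat _ (n:=m.+1)) //. Qed.

Lemma ahat_pos (R : realFieldType) (a : nat -> R) n :
  (forall i, (2 <= i <= n)%N -> 0 < a i) ->
  forall k, (1 <= k <= n)%N -> 0 < ahat a k 1.
Proof.
move=> ha; elim=> [|k IH] hk; first by lia.
case: k IH hk => [|k] IH hk; first by rewrite ahat1.
rewrite ahat_rec //; apply: mulr_gt0; first by apply: IH; lia.
apply: ha; lia.
Qed.

Theorem lemma4 (R : realFieldType) (n : nat) (a b Lt Rt : nat -> R)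
  (istar : nat) :
  (2 <= n)%N ->
  (forall i, (2 <= i <= n)%N -> 0 < a i) ->
  (forall i, (2 <= i <= n)%N -> Lt i = a i * Rt i.-1 + b i) ->
  (forall i, (2 <= i <= n.-1)%N -> Lt i <= Rt i) ->
  (* i* >= 2: the minimum of \hat a_{k,1} over 2 <= k <= n is <= 1 and is
     attained at i* *)
  (2 <= istar <= n)%N ->
  (forall k, (2 <= k <= n)%N -> ahat a istar 1 <= ahat a k 1) ->
  ahat a istar 1 <= 1 ->
  \sum_(2 <= j < n.+1) (Lt j - Rt j.-1)
    <= (ahat a istar 1 - 1) * Rt 1
       + (ahat a n istar - 1) / ahat a n istar * Lt n
       + bhat a b n / ahat a n istar.
Proof.
move=> hn ha hL hLR hi hmin _.
set A := fun k => ahat a k 1.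
have Apos : forall k, (1 <= k <= n)%N -> 0 < A k by apply: ahat_pos.
have tele : forall m, (2 <= m)%N ->
  \sum_(2 <= j < m.+1) (Lt j - Rt j.-1) =
  Lt m - Rt 1 - \sum_(2 <= k < m) (Rt k - Lt k).
  elim=> [|m IH] // hm.
  case: m IH hm => [|[|m]] IH hm //.
    by rewrite big_nat1 big_geq //= subr0.
  rewrite big_nat_recr //= IH // [in RHS]big_nat_recr //=; ring.
have key : forall m, (m.+2 <= n)%N ->
  Lt m.+2 / A m.+2 = Rt 1 + \sum_(2 <= k < m.+2) (Rt k - Lt k) / A k
                      + \sum_(2 <= k < m.+3) b k / A k.
  elim=> [|m IH] hm.
    rewrite big_geq // big_nat1 /A ahat_rec // ahat1 mul1r hL //=.
    have := ha 2%N; rewrite hm => /(_ isT) h2.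
    by field; rewrite gt_eqF.
  rewrite [\sum_(2 <= k < m.+4) _]big_nat_recr //=.
  rewrite [\sum_(2 <= k < m.+3) (Rt k - Lt k) / A k]big_nat_recr //=.
  have IH' := IH (ltnW hm).
  have hAm : 0 < A m.+2 by apply: Apos; lia.
  have ham : 0 < a m.+3 by apply: ha; lia.
  have -> : A m.+3 = A m.+2 * a m.+3 by rewrite /A ahat_rec.
  rewrite hL; last by lia.
  have -> : \sum_(2 <= k < m.+2) (Rt k - Lt k) / A k =
     Lt m.+2 / A m.+2 - Rt 1 - \sum_(2 <= k < m.+3) b k / A k
     by rewrite IH'; ring.
  rewrite /=.
  field; rewrite ?mulf_neq0 ?gt_eqF //.
set D := \sum_(2 <= k < n) (Rt k - Lt k).
set E := \sum_(2 <= k < n) (Rt k - Lt k) / A k.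
set B := \sum_(2 <= k < n.+1) b k / A k.
have hAn : 0 < A n by apply: Apos; lia.
have hAs : 0 < A istar by apply: Apos; lia.
have hLn : Lt n = A n * (Rt 1 + E + B).
  have e : n.-2.+2 = n by lia.
  have hh : (n.-2.+2 <= n)%N by rewrite e.
  have k := key n.-2 hh.
  rewrite e in k.
  by rewrite -k mulrC divfK // gt_eqF.
have hsplit : forall k, (1 <= k <= n)%N -> ahat a n k = A n / A k.
  move=> k hk; have hAk : 0 < A k by apply: Apos.
  rewrite /A (@ahat_split _ a _ _ hk); field; by rewrite gt_eqF.
have hbhat : bhat a b n = A n * B.
  rewrite /bhat /B mulr_sumr; apply: eq_big_nat => k hk.
  rewrite hsplit; last by lia.
  have : 0 < A k by apply: Apos; lia.
  by move=> h; field; rewrite gt_eqF.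
rewrite tele // hbhat hsplit; last by lia.
have -> : (ahat a istar 1 - 1) * Rt 1 + (A n / A istar - 1) / (A n / A istar) *
   Lt n + A n * B / (A n / A istar)
   = Lt n - Rt 1 - A istar * E.
  rewrite -/(A istar) hLn; field; by rewrite !gt_eqF.
rewrite lerD2l lerN2 /D /E mulr_sumr.
apply: ler_sum_nat => k hk.
have hAk : 0 < A k by apply: Apos; lia.
have hd : 0 <= Rt k - Lt k by rewrite subr_ge0; apply: hLR; lia.
have hm : A istar <= A k by apply: hmin; lia.
rewrite mulrA ler_pdivrMr //.
by rewrite mulrC ler_wpM2l.
Qed.
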